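(* Consider $N=3$ vehicles $Q_1,Q_2,Q_3$ in the setting described in the context, with safety levels $s_{ij}(t)=V_{ij}(x_{ij}(t))$ and the cooperative control strategy determined at each time by the mixed integer program with the reward coefficient matrix described in the context. If $s_{12}, s_{23}, s_{31} \ge 0$ at some time $t=t_0$, then this joint control strategy guarantees that $s_{12}, s_{23}, s_{31} \ge 0$ for all $t>t_0$.
   Context: There are $N$ vehicles $Q_i$ with dynamics $\dot x_i = f_i(x_i,u_i)$, $u_i\in\mathcal U_i$, $x_i\in\mathbb R^{n_i}$, where control functions $u_i(\cdot)\in\mathbb U_i$ are measurable and $f_i$ is uniformly continuous, bounded and Lipschitz in $x_i$ for fixed $u_i$. For each pair $i\neq j$ there is relative dynamics $\dot x_{ij}=g_{ij}(x_{ij},u_i,u_j)$ (with $g_{ij}$ uniformly continuous, bounded, Lipschitz in $x_{ij}$ for fixed controls) and a danger zone $\mathcal Z_{ij}$ of relative states, with $x_i\in\mathcal Z_{ij}\Leftrightarrow x_j\in\mathcal Z_{ji}$. The backward reachable set is $\mathcal R_{ij}(t)=\{x_{ij}: \forall u_i(\cdot)\in\mathbb U_i,\ \exists u_j(\cdot)\in\mathbb U_j$ such that the trajectory of the relative dynamics satisfies $x_{ij}(s)\in\mathcal Z_{ij}$ for some $s\in[0,t]\}$, represented by a value function $V_{ij}(t,\cdot)$ with $\mathcal R_{ij}(t)=\{x_{ij}:V_{ij}(t,x_{ij})\le 0\}$; write $V_{ij}(x_{ij})=\lim_{t\to\infty}V_{ij}(t,x_{ij})$. The pairwise optimal (safety)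 control $u_{ij}^*$ of $Q_i$ with respect to $Q_j$ is the control obtained from the gradient of $V_{ij}$, which guarantees $Q_i$ avoids $\mathcal Z_{ij}$ over an infinite horizon regardless of $Q_j$'s action whenever applied from a relative state outside $\{V_{ij}\le 0\}$. The safety level is $s_{ij}=V_{ij}(x_{ij})$. Fix a safety threshold $K>0$. At each time, a control logic matrix $U\in\{0,1\}^{N\times N}$ with entries $u_{ij}$ is chosen as an optimal solution of the mixed integer program: maximize $\sum_{i,j} c_{ij}u_{ij}$ subject to $u_{ij}+u_{ji}\le 1$ for all $i\ne j$, $\sum_j u_{ij}\le 1$ for all $i$, $u_{ij}\in\{0,1\}$. The reward coefficients are $c_{ii}=-\infty$; for $i\neq j$, $c_{ij}=-1$ if $s_{ij}>K$ and $c_{ij}=p_{ij}^2$ if $s_{ij}\le K$, where for $N=3$ the priority matrix is $P=(p_{ij})=\begin{bmatrix} * & 6 & 3\\ 2 & * & 5\\ 4 & 1 & *\end{bmatrix}$ (diagonal entries irrelevant). If $u_{ij}=1$, vehicle $Q_i$ executes the pairwise optimal control $u_{ij}^*$ to avoid $Q_j$. *)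

(* Defs.v *)
From HB Require Import structures.
From mathcomp Require Import all_boot all_order all_algebra.
From mathcomp Require Import all_classical all_reals all_analysis.
Set Implicit Arguments. Unset Strict Implicit. Unset Printing Implicit Defensive.
Import Order.TTheory GRing.Theory Num.Theory.
Import numFieldNormedType.Exports.
Local Open Scope ring_scope.

(* Vehicles Q_1,Q_2,Q_3 are indexed by 'I_3 = {0,1,2}: vehicle Q_k is index k-1. *)

Definition ctrl_logic := 'I_3 -> 'I_3 -> bool.

Definition mip_feasible (u : ctrl_logic) : Prop :=
  (forall i j : 'I_3, i != j -> ((u i j : nat) + (u j i : nat) <= 1)%N) /\
  (forall i : 'I_3, (\sum_(j < 3) (u i j : nat) <= 1)%N).

(* Objective sum_{i,j} c_ij u_ij, in the extended reals (c_ii = -oo),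
   with the convention 0 * (-oo) = 0. *)
Definition mip_objective (R : realType) (c : 'I_3 -> 'I_3 -> \bar R)
  (u : ctrl_logic) : \bar R :=
  (\sum_(i < 3) \sum_(j < 3) (if u i j then c i j else 0%E))%E.

Definition mip_optimal (R : realType) (c : 'I_3 -> 'I_3 -> \bar R)
  (u : ctrl_logic) : Prop :=
  mip_feasible u /\
  forall u' : ctrl_logic, mip_feasible u' ->
    (mip_objective c u' <= mip_objective c u)%E.

Definition prio (R : realType) (i j : 'I_3) : R :=
  match nat_of_ord i, nat_of_ord j with
  | 0, 1 => 6 | 0, 2 => 3
  | 1, 0 => 2 | 1, 2 => 5
  | 2, 0 => 4 | 2, 1 => 1
  | _, _ => 0
  end.

Definition reward (R : realType) (K : R) (s : 'I_3 -> 'I_3 -> R)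
  (i j : 'I_3) : \bar R :=
  if i == j then -oo%E
  else if K < s i j then (-1)%E
  else ((prio R i j) ^+ 2)%:E.

(* Main.v *)
Require Import Defs.
From HB Require Import structures.
From mathcomp Require Import all_boot all_order all_algebra.
From mathcomp Require Import all_classical all_reals all_analysis.
From mathcomp Require Import lra.
Import Order.TTheory GRing.Theory Num.Theory.
Import numFieldNormedType.Exports.
Local Open Scope ring_scope.
Local Open Scope classical_set_scope.
Local Open Scope ring_scope.
Definition o0 : 'I_3 := @Ordinal 3 0 isT.
Definition o1 : 'I_3 := @Ordinal 3 1 isT.
Definition o2 : 'I_3 := @Ordinal 3 2 isT.
Lemma sum3 (T : Type) (idx : T) (op : Monoid.law idx) (F : 'I_3 -> T) :
  \big[op/idx]_(j < 3) F j = op (op (F o0) (F o1)) (F o2).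
Proof.
rewrite !big_ord_recr big_ord0 /= Monoid.mul1m.
by congr (op (op (F _) (F _)) (F _)); apply/val_inj.
Qed.
Lemma ord3_cases (i : 'I_3) : i = o0 \/ i = o1 \/ i = o2.
Proof.
case: i => [[|[|[|m]]] H]; [left|right;left|right;right|by []];
 by apply/val_inj.
Qed.

Section Comb.
Variables (R : realType) (K : R) (sv : 'I_3 -> 'I_3 -> R).
Definition cr (i j : 'I_3) : R := if K < sv i j then -1 else prio R i j ^+ 2.
Definition Eo (u : ctrl_logic) : R :=
  (if u o0 o1 then cr o0 o1 else 0) + (if u o0 o2 then cr o0 o2 else 0) +
  (if u o1 o0 then cr o1 o0 else 0) + (if u o1 o2 then cr o1 o2 else 0) +
  (if u o2 o0 then cr o2 o0 else 0) + (if u o2 o1 then cr o2 o1 else 0).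

Lemma rew_off (i j : 'I_3) : i != j -> reward K sv i j = (cr i j)%:E.
Proof. move=> /negbTE Hij; rewrite /reward Hij /cr; case: ifP => // _. Qed.

Lemma obj_le (u : ctrl_logic) : (mip_objective (reward K sv) u <= (Eo u)%:E)%E.
Proof.
apply: (@le_trans _ _ (\sum_(i < 3) \sum_(j < 3)
   ((if u i j && (i != j) then cr i j else 0)%:E))%E).
  apply: lee_sum => i _; apply: lee_sum => j _.
  case: (eqVneq i j) => [->|Hij].
    rewrite /reward eqxx andbF; case: (u j j); [exact: leNye|exact: lexx].
  by rewrite andbT rew_off //; case: (u i j).
rewrite (eq_bigr (fun i => (\sum_(j < 3) (if u i j && (i != j) then cr i j else 0))%:E)).
  rewrite sumEFin lee_fin le_eqVlt; apply/orP; left; apply/eqP.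
  by rewrite !sum3 /= /Eo !andbF !andbT; lra.
by move=> i _; rewrite sumEFin.
Qed.
Lemma obj_ge (u : ctrl_logic) : (forall i, u i i = false) ->
  ((Eo u)%:E <= mip_objective (reward K sv) u)%E.
Proof.
move=> Hd.
rewrite /mip_objective (eq_bigr (fun i => (\sum_(j < 3) (if u i j && (i != j) then cr i j else 0))%:E)).
  rewrite sumEFin lee_fin le_eqVlt; apply/orP; left; apply/eqP.
  by rewrite !sum3 /= /Eo !andbF !andbT; lra.
move=> i _; rewrite -sumEFin; apply: eq_bigr => j _.
case: (eqVneq i j) => [->|Hij]; first by rewrite Hd.
by rewrite andbT rew_off //; case: (u i j).
Qed.

Lemma feas_elim (u : ctrl_logic) : mip_feasible u ->
  [/\ (u o0 o1 + u o1 o0 <= 1)%N, (u o1 o2 + u o2 o1 <= 1)%N,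
      (u o0 o2 + u o2 o0 <= 1)%N &
   [/\ (u o0 o0 + u o0 o1 + u o0 o2 <= 1)%N,
       (u o1 o0 + u o1 o1 + u o1 o2 <= 1)%N &
       (u o2 o0 + u o2 o1 + u o2 o2 <= 1)%N]].
Proof.
case=> Hp Hr; split; try by apply: Hp.
by split; have := Hr o0; have := Hr o1; have := Hr o2; rewrite !sum3.
Qed.

Lemma feas_intro (u : ctrl_logic) :
  (u o0 o1 + u o1 o0 <= 1)%N -> (u o1 o2 + u o2 o1 <= 1)%N ->
  (u o0 o2 + u o2 o0 <= 1)%N ->
  (u o0 o0 + u o0 o1 + u o0 o2 <= 1)%N ->
  (u o1 o0 + u o1 o1 + u o1 o2 <= 1)%N ->
  (u o2 o0 + u o2 o1 + u o2 o2 <= 1)%N -> mip_feasible u.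
Proof.
move=> H1 H2 H3 H4 H5 H6; split.
  move=> i j; case: (ord3_cases i) => [->|[->|->]];
   case: (ord3_cases j) => [->|[->|->]] //; by rewrite addnC.
by move=> i; rewrite sum3 /=; case: (ord3_cases i) => [->|[->|->]].
Qed.

Definition upd (u : ctrl_logic) (i j : 'I_3) : ctrl_logic :=
  fun a b => if a == b then false else if a == i then b == j
             else if (a == j) && (b == i) then false else u a b.

Lemma crle (a b : 'I_3) : cr a b <= prio R a b ^+ 2.
Proof.
rewrite /cr; case: ifP => // _.
have := sqr_ge0 (prio R a b); lra.
Qed.

Lemma creq (a b : 'I_3) : sv a b <= K -> cr a b = prio R a b ^+ 2.
Proof. by move=> H; rewrite /cr ltNge H. Qed.

Lemma key (u : ctrl_logic) : mip_optimal (reward K sv) u ->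
  forall i j, (i, j) \in [:: (o0, o1); (o1, o2); (o2, o0)] -> sv i j <= K -> u i j.
Proof.
move=> [Hf Hopt] i j Hin Hle.
apply: contraT => Hn.
have [h1 h2 h3 [h4' h5' h6']] := feas_elim _ Hf.
have h4 : (u o0 o1 + u o0 o2 <= 1)%N by apply: leq_trans h4'; rewrite -addnA leq_addl.
have h5 : (u o1 o0 + u o1 o2 <= 1)%N.
  by apply: leq_trans h5'; rewrite -addnA leq_add2l leq_addl.
have h6 : (u o2 o0 + u o2 o1 <= 1)%N by apply: leq_trans h6'; rewrite leq_addr.
have Hfu' : mip_feasible (upd u i j).
  move: Hin Hn; rewrite !inE => /orP[/eqP[-> ->]|/orP[/eqP[-> ->]|/eqP[-> ->]]] Hn;
  apply: feas_intro; rewrite /upd /=;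
  move: h1 h2 h3 h4 h5 h6 Hn;
  case: (u o0 o1); case: (u o0 o2);
  case: (u o1 o0); case: (u o1 o2);
  case: (u o2 o0); case: (u o2 o1) => //=.
have Hd' : forall a, upd u i j a a = false by move=> a; rewrite /upd eqxx.
have HE : Eo (upd u i j) <= Eo u.
  rewrite -lee_fin; apply: le_trans (obj_ge _ Hd') _.
  exact: le_trans (Hopt _ Hfu') (obj_le u).
move: HE; rewrite /Eo; have := crle o0 o1; have := crle o0 o2; have := crle o1 o0;
  have := crle o1 o2; have := crle o2 o0; have := crle o2 o1.
move: Hin Hn Hle; rewrite !inE => /orP[/eqP[-> ->]|/orP[/eqP[-> ->]|/eqP[-> ->]]] Hn Hle;
  rewrite (creq _ _ Hle) /prio /= !expr2 => c21 c20 c12 c10 c02 c01;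
  rewrite /Eo /upd /=;
  move: h1 h2 h3 h4 h5 h6 Hn;
  case: (u o0 o1); case: (u o0 o2);
  case: (u o1 o0); case: (u o1 o2);
  case: (u o2 o0); case: (u o2 o1) => //= *; exfalso; lra.
Qed.
End Comb.

Lemma ball_R (R : realType) (a x e : R) : `|a - x| < e -> ball a e x.
Proof. by rewrite /ball /=. Qed.

Lemma stay_safe (R : realType) (K t0 : R) (g : R -> R) (HK : 0 < K)
  (Hg : continuous g)
  (Hyp : forall a b, t0 <= a -> a <= b ->
     (forall tau, a <= tau -> tau <= b -> g tau <= K) -> 0 <= g a -> 0 <= g b)
  (H0 : 0 <= g t0) : forall t, t0 <= t -> 0 <= g t.
Proof.
move=> t Ht.
pose S := [set tau | t0 <= tau /\ tau <= t /\ K < g tau].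
have [[tau Stau]|S0] := pselect (S !=set0); last first.
  apply: (Hyp t0 t) => // tau h1 h2; rewrite leNgt; apply/negP => hK.
  by apply: S0; exists tau.
have hs : has_sup S by split; [exists tau | exists t => y [_ []]].
set a := sup S.
have aub := sup_upper_bound hs.
have hta : t0 <= a by have [h _] := Stau; apply: le_trans h (aub _ Stau).
have hat : a <= t by apply: ge_sup => //; [exists tau | move=> y [_ []]].
have ga0 : 0 <= g a.
  rewrite leNgt; apply/negP => hlt.
  have HH := cvgr_lt _ (Hg a) _ (lt_trans hlt HK). have [e /= e0 He] := (nbhs_ballP _ _).1 (HH _).
  have [y [h1 [h2 h3]] hy] := sup_adherent e0 hs.
  have yle : y <= a := aub y (conj h1 (conj h2 h3)).
  have hb : ball a e y.
    apply: ball_R; rewrite ger0_norm ?subr_ge0 //; rewrite -/a in hy; lra.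
  have := He y hb; rewrite /=; lra.
have [<-//|atlt] := eqVneq a t.
have gaK : g a <= K.
  rewrite leNgt; apply/negP => hlt.
  have HH := cvgr_gt _ (Hg a) _ hlt. have [e /= e0 He] := (nbhs_ballP _ _).1 (HH _).
  have hat' : a < t by rewrite lt_neqAle atlt hat.
  pose y := Num.min (a + e / 2) t.
  have hy1 : a < y by rewrite /y lt_min hat' andbT; lra.
  have hy2 : y <= a + e / 2 by rewrite /y ge_min lexx.
  have hy3 : y <= t by rewrite /y ge_min lexx orbT.
  have hb : ball a e y.
    apply: ball_R; rewrite distrC ger0_norm ?subr_ge0; lra.
  have := He y hb; rewrite /= => hgy.
  have := aub y (conj (le_trans hta (ltW hy1)) (conj hy3 hgy)); rewrite -/a; lra.
apply: (Hyp a t) => // x hx1 hx2.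
have [->//|xa] := eqVneq x a.
rewrite leNgt; apply/negP => hlt.
have : x <= a := aub x (conj (le_trans hta hx1) (conj hx2 hlt)).
have xa' : a < x by rewrite lt_neqAle eq_sym xa hx1.
rewrite -/a; lra.
Qed.

Theorem theorem1 (R : realType) (K : R) (t0 : R)
  (d : 'I_3 -> 'I_3 -> nat)                        (* dims of relative states x_ij *)
  (Ctrl : 'I_3 -> Type)                            (* control sets U_i *)
  (V : forall i j : 'I_3, 'rV[R]_(d i j) -> R)     (* value functions V_ij *)
  (ustar : forall i j : 'I_3, 'rV[R]_(d i j) -> Ctrl i) (* pairwise optimal controls u_ij^* *)
  (xr : forall i j : 'I_3, R -> 'rV[R]_(d i j))    (* relative trajectories x_ij(t) *)
  (u : forall i : 'I_3, R -> Ctrl i)               (* applied controls u_i(t) *)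
  (U : R -> ctrl_logic)                            (* control logic matrix at time t *)
  (HK : 0 < K)
  (HVcont : forall i j, continuous (V i j))
  (Hxcont : forall i j, continuous (xr i j))
  (* safety guarantee of the pairwise optimal control: while Q_i applies u_ij^*,
     whatever the other vehicles do, the safety level s_ij stays >= 0
     if it starts >= 0 *)
  (Hsafe : forall (i j : 'I_3) (a b : R), i != j -> t0 <= a -> a <= b ->
     (forall t, a <= t -> t <= b -> u i t = ustar i j (xr i j t)) ->
     0 <= V i j (xr i j a) -> 0 <= V i j (xr i j b))
  (* at each time, U is an optimal solution of the MIP with reward coefficients
     computed from the current safety levels s_ij(t) = V_ij(x_ij(t)) *)
  (HU : forall t, t0 <= t ->
     mip_optimal (reward K (fun i j => V i j (xr i j t))) (U t))
  (* if u_ij = 1, Q_i executes the pairwise optimal control u_ij^* *)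
  (Hexec : forall t (i j : 'I_3), t0 <= t -> U t i j ->
     u i t = ustar i j (xr i j t)) :
  let s := fun (i j : 'I_3) (t : R) => V i j (xr i j t) in
  0 <= s ord0 (inord 1) t0 -> 0 <= s (inord 1) (inord 2) t0 ->
  0 <= s (inord 2) ord0 t0 ->
  forall t, t0 < t ->
    [/\ 0 <= s ord0 (inord 1) t, 0 <= s (inord 1) (inord 2) t
      & 0 <= s (inord 2) ord0 t].
Proof.
move=> s h01 h12 h20.
have gen : forall i j, (i, j) \in [:: (o0, o1); (o1, o2); (o2, o0)] ->
   0 <= V i j (xr i j t0) -> forall t, t0 <= t -> 0 <= V i j (xr i j t).
  move=> i j Hin H0.
  have Hij : i != j.
    by move: Hin; rewrite !inE => /orP[/eqP[-> ->]|/orP[/eqP[-> ->]|/eqP[-> ->]]].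
  apply: (stay_safe _ _ _ (fun tau => V i j (xr i j tau)) HK) => //.
    by move=> x; apply: continuous_comp; [exact: Hxcont|exact: HVcont].
  move=> a b ha hab hK ha0; apply: (Hsafe i j a b Hij ha hab) => // tau h1 h2.
  have htau : t0 <= tau by apply: le_trans ha h1.
  apply: (Hexec tau i j htau).
  exact: (key _ _ _ _ (HU tau htau) _ _ Hin (hK tau h1 h2)).
have e1 : inord 1 = o1 by apply: val_inj; rewrite /= inordK.
have e2 : inord 2 = o2 by apply: val_inj; rewrite /= inordK.
have e0 : ord0 = o0 by apply: val_inj.
move: h01 h12 h20; rewrite /s e1 e2 e0 => h01 h12 h20 t Ht.
have Ht' : t0 <= t by apply: ltW.
by split; apply: gen => //; rewrite !inE eqxx ?orbT.
Qed.
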